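(* Let $R$ be a GCD-domain and let $a\in R$ be a non-zero element with $a\notin R^{\ast}$. Then the following conditions on $a$ are all equivalent: (ii) there exist $n\geqslant 0$ and $s_0,s_1,\dots,s_n\in\operatorname{Sqf} R$ such that $a=s_n^{2^n}s_{n-1}^{2^{n-1}}\cdots s_1^2s_0$; (iii) there exist $n\geqslant 1$, $s_1,\dots,s_n\in(\operatorname{Sqf} R)\setminus R^{\ast}$, integers $0\leqslant k_1<k_2<\dots<k_n$, and $c\in R^{\ast}$ such that $a=c\,s_n^{2^{k_n}}s_{n-1}^{2^{k_{n-1}}}\cdots s_1^{2^{k_1}}$; (iv) there exist $n\geqslant 1$ and $s_1,\dots,s_n\in\operatorname{Sqf} R$ such that $s_i\mid s_{i+1}$ for $i=1,\dots,n-1$ and $a=s_1s_2\cdots s_n$; (v) there exist $n\geqslant 1$, $s_1,\dots,s_n\in(\operatorname{Sqf} R)\setminus R^{\ast}$, integers $k_1,\dots,k_n\geqslant 1$, and $c\in R^{\ast}$ such that $s_i\mid s_{i+1}$ and $s_i\not\sim s_{i+1}$ for $i=1,\dots,n-1$, and $a=c\,s_1^{k_1}s_2^{k_2}\cdots s_n^{k_n}$; (vi) there exist $n\geqslant 1$ and $s_1,\dots,s_n\in\operatorname{Sqf} R$ such that $s_i$ and $s_j$ are relatively prime for $i\neq j$, and $a=s_1s_2^2s_3^3\cdots s_n^n$; (vii) there exist $n\geqslant 1$, $s_1,\dots,s_n\in(\operatorname{Sqf} R)\setminus R^{\ast}$, integers $1\leqslant k_1<k_2<\dots<k_n$, and $c\in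 R^{\ast}$ such that $s_i$ and $s_j$ are relatively prime for $i\neq j$, and $a=c\,s_1^{k_1}s_2^{k_2}\cdots s_n^{k_n}$.
   Context: A domain is a commutative ring with identity without zero divisors. A GCD-domain is a domain in which the intersection of any two principal ideals is principal. $R^{\ast}$ denotes the set of invertible elements of $R$. For $a,b\in R$, $a\sim b$ means $a$ and $b$ are associated, and $a\mid b$ means $a$ divides $b$. Elements $a,b$ are relatively prime if they have no common non-invertible divisor. An element $a\in R$ is square-free if it cannot be written as $a=b^2c$ with $b\in R\setminus R^{\ast}$ and $c\in R$; $\operatorname{Sqf} R$ denotes the set of square-free elements of $R$. *)

(* Defs.v *)
From HB Require Import structures.
From mathcomp Require Import all_boot all_order all_algebra.
Set Implicit Arguments. Unset Strict Implicit. Unset Printing Implicit Defensive.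
Import Order.TTheory GRing.Theory.
Local Open Scope ring_scope.

Definition dvdR (R : comPzRingType) (a b : R) : Prop := exists c : R, b = c * a.

Definition assocR (R : comPzRingType) (a b : R) : Prop := dvdR a b /\ dvdR b a.

(* GCD-domain: the intersection of any two principal ideals aR, bR is principal
   (equal to mR for some m). x \in aR iff a | x. *)
Definition gcd_domain (R : idomainType) : Prop :=
  forall a b : R, exists m : R, forall x : R, (dvdR a x /\ dvdR b x) <-> dvdR m x.

Definition rel_primeR (R : idomainType) (a b : R) : Prop :=
  forall d : R, dvdR d a -> dvdR d b -> d \is a GRing.unit.

Definition sqfR (R : idomainType) (a : R) : Prop :=
  ~ (exists b c : R, ~~ (b \is a GRing.unit) /\ a = b ^+ 2 * c).

Section Conds.
Variables (R : idomainType) (a : R).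

Definition cond_ii : Prop :=
  exists (n : nat) (s : nat -> R),
    (forall i, (i <= n)%N -> sqfR (s i)) /\
    a = \prod_(i < n.+1) s i ^+ (2 ^ i).

Definition cond_iii : Prop :=
  exists (n : nat) (s : nat -> R) (k : nat -> nat) (c : R),
    (1 <= n)%N /\
    (forall i, (1 <= i <= n)%N -> sqfR (s i) /\ ~~ (s i \is a GRing.unit)) /\
    (forall i, (1 <= i < n)%N -> (k i < k i.+1)%N) /\
    c \is a GRing.unit /\
    a = c * \prod_(1 <= i < n.+1) s i ^+ (2 ^ k i).

Definition cond_iv : Prop :=
  exists (n : nat) (s : nat -> R),
    (1 <= n)%N /\
    (forall i, (1 <= i <= n)%N -> sqfR (s i)) /\
    (forall i, (1 <= i < n)%N -> dvdR (s i) (s i.+1)) /\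
    a = \prod_(1 <= i < n.+1) s i.

Definition cond_v : Prop :=
  exists (n : nat) (s : nat -> R) (k : nat -> nat) (c : R),
    (1 <= n)%N /\
    (forall i, (1 <= i <= n)%N -> sqfR (s i) /\ ~~ (s i \is a GRing.unit)) /\
    (forall i, (1 <= i <= n)%N -> (1 <= k i)%N) /\
    c \is a GRing.unit /\
    (forall i, (1 <= i < n)%N -> dvdR (s i) (s i.+1) /\ ~ assocR (s i) (s i.+1)) /\
    a = c * \prod_(1 <= i < n.+1) s i ^+ k i.

Definition cond_vi : Prop :=
  exists (n : nat) (s : nat -> R),
    (1 <= n)%N /\
    (forall i, (1 <= i <= n)%N -> sqfR (s i)) /\
    (forall i j, (1 <= i <= n)%N -> (1 <= j <= n)%N -> i <> j ->
       rel_primeR (s i) (s j)) /\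
    a = \prod_(1 <= i < n.+1) s i ^+ i.

Definition cond_vii : Prop :=
  exists (n : nat) (s : nat -> R) (k : nat -> nat) (c : R),
    (1 <= n)%N /\
    (forall i, (1 <= i <= n)%N -> sqfR (s i) /\ ~~ (s i \is a GRing.unit)) /\
    (1 <= k 1)%N /\
    (forall i, (1 <= i < n)%N -> (k i < k i.+1)%N) /\
    c \is a GRing.unit /\
    (forall i j, (1 <= i <= n)%N -> (1 <= j <= n)%N -> i <> j ->
       rel_primeR (s i) (s j)) /\
    a = c * \prod_(1 <= i < n.+1) s i ^+ k i.

End Conds.

(* Main.v *)
Require Import Defs.
From HB Require Import structures.
From mathcomp Require Import all_boot all_order all_algebra.
From mathcomp Require Import ring zify.
Import GRing.Theory.
Local Open Scope ring_scope.
Set Implicit Arguments. Unset Strict Implicit. Unset Printing Implicit Defensive.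

Section Basics.
Variable R : idomainType.
Implicit Types x y z a b c d s t u : R.

Lemma dvd_refl x : dvdR x x.
Proof. by exists 1; rewrite mul1r. Qed.

Lemma dvd_trans x y z : dvdR x y -> dvdR y z -> dvdR x z.
Proof. by move=> [c ->] [e ->]; exists (e * c); rewrite mulrA. Qed.

Lemma dvd_mulr x y z : dvdR x y -> dvdR x (y * z).
Proof. by move=> [c ->]; exists (z * c); rewrite mulrC mulrA. Qed.

Lemma dvd_mull x y z : dvdR x y -> dvdR x (z * y).
Proof. by move=> [c ->]; exists (z * c); rewrite mulrA. Qed.

Lemma dvd_mul2 a b c d : dvdR a b -> dvdR c d -> dvdR (a * c) (b * d).
Proof.
by move=> [e ->] [f ->]; exists (e * f); rewrite -!mulrA; congr (_ * _); rewrite mulrCA.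
Qed.

Lemma dvd_factl x y : dvdR x (x * y).
Proof. by exists y; rewrite mulrC. Qed.

Lemma dvd_factr x y : dvdR y (x * y).
Proof. by exists x. Qed.

Lemma dvd_unit d u : u \is a GRing.unit -> dvdR d u -> d \is a GRing.unit.
Proof. by move=> Hu [c Hc]; move: Hu; rewrite Hc unitrM => /andP[]. Qed.

Lemma unit_dvd u x : u \is a GRing.unit -> dvdR u x.
Proof. by move=> Hu; exists (x / u); rewrite divrK. Qed.

Lemma dvd0 x : dvdR x 0.
Proof. by exists 0; rewrite mul0r. Qed.

Lemma dvd_cancel c x y : c != 0 -> dvdR (x * c) (y * c) -> dvdR x y.
Proof. by move=> Hc [e He]; exists e; apply: (mulIf Hc); rewrite He mulrA. Qed.

Lemma dvd_cancell c x y : c != 0 -> dvdR (c * x) (c * y) -> dvdR x y.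
Proof. by rewrite ![c * _]mulrC; apply: dvd_cancel. Qed.

Lemma dvd_neq0 d x : x != 0 -> dvdR d x -> d != 0.
Proof. by move=> Hx [c Hc]; apply: contraNneq Hx => Hd; rewrite Hc Hd mulr0. Qed.

Lemma relprime_sym x y : rel_primeR x y -> rel_primeR y x.
Proof. by move=> H d H1 H2; apply: H. Qed.

Lemma relprime_dvd x y x' y' :
  dvdR x' x -> dvdR y' y -> rel_primeR x y -> rel_primeR x' y'.
Proof. by move=> H1 H2 H d Hx Hy; apply: H; [exact: dvd_trans Hx H1 | exact: dvd_trans Hy H2]. Qed.

Lemma relprime_unit u y : u \is a GRing.unit -> rel_primeR u y.
Proof. by move=> Hu d Hd _; apply: dvd_unit Hu Hd. Qed.

Lemma sqfP s : sqfR s <-> (forall b, dvdR (b * b) s -> b \is a GRing.unit).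
Proof.
split.
  move=> H b [c Hc]; case: (boolP (b \is a GRing.unit)) => // Hb.
  by case: H; exists b, c; split => //; rewrite Hc expr2 mulrC.
move=> H [b [c [Hb Hs]]]; move/negP: Hb; apply; apply: H.
by exists c; rewrite Hs expr2 mulrC.
Qed.

Lemma sqf_neq0 s : sqfR s -> s != 0.
Proof.
move/sqfP => H; apply/eqP => Hs.
have := H 0; rewrite Hs unitr0; by move/(_ (dvd0 _)).
Qed.

Lemma sqf_dvd s t : dvdR t s -> sqfR s -> sqfR t.
Proof.
move=> Hts /sqfP H; apply/sqfP => b Hb; apply: H; exact: dvd_trans Hb Hts.
Qed.

Lemma sqf_unit u : u \is a GRing.unit -> sqfR u.
Proof. move=> Hu; apply/sqfP => b Hb; have := dvd_unit Hu Hb; rewrite unitrM => /andP[]//. Qed.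

Lemma sqf_mul_relprime x y : sqfR (x * y) -> rel_primeR x y.
Proof. move=> /sqfP H d Hx Hy; apply: H; exact: dvd_mul2. Qed.

Lemma unit_mul_dvd u x : u \is a GRing.unit -> dvdR (u * x) x.
Proof. by move=> Hu; exists u^-1; rewrite mulrA mulVr ?mul1r. Qed.

Lemma sqf_unitl u x : u \is a GRing.unit -> sqfR x -> sqfR (u * x).
Proof. by move=> Hu; apply: sqf_dvd; apply: unit_mul_dvd. Qed.

Lemma dvd1 x : dvdR x 1 -> x \is a GRing.unit.
Proof. by apply: dvd_unit; rewrite unitr1. Qed.

End Basics.
Section Gcd.
Variable R : idomainType.
Hypothesis gcdR : gcd_domain R.
Implicit Types x y z a b c d s t u : R.

Lemma gauss x y z : rel_primeR x y -> dvdR x (y * z) -> dvdR x z.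
Proof.
have [->|Hx] := eqVneq x 0; move=> Hxy Hd.
  have Hy : y \is a GRing.unit by apply: Hxy; [exact: dvd0 | exact: dvd_refl].
  case: Hd => c; rewrite mulr0 => /eqP; rewrite mulf_eq0 => /orP[/eqP Hy0|/eqP ->].
    by move: Hy; rewrite Hy0 unitr0.
  exact: dvd0.
have [Hy0|Hy] := eqVneq y 0.
  have Hx1 : x \is a GRing.unit by apply: Hxy; [exact: dvd_refl | rewrite Hy0; exact: dvd0].
  exact: unit_dvd.
have [m Hm] := gcdR x y.
have Hmm : dvdR x m /\ dvdR y m by apply/Hm; exact: dvd_refl.
case: Hmm => [[p Hp] [q Hq]].
have [e He] : dvdR m (x * y) by apply/Hm; split; [exact: dvd_factl | exact: dvd_factr].
have Hyep : y = e * p.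
  by apply: (mulIf Hx); rewrite mulrC He Hp mulrA.
have Hxeq : x = e * q.
  by apply: (mulIf Hy); rewrite He Hq mulrA.
have Heu : e \is a GRing.unit.
  by apply: Hxy; [rewrite Hxeq; exact: dvd_factl | rewrite Hyep; exact: dvd_factl].
have [f Hf] : dvdR m (y * z) by apply/Hm; split => //; exact: dvd_factl.
exists (f / e).
apply: (mulIf Hy); rewrite /= [y * z]mulrC in Hf.
rewrite /= Hf.
have -> : m = e^-1 * (x * y) by rewrite He mulrA mulVr ?mul1r.
by rewrite !mulrA.
Qed.


Lemma gcd_ex x y : x != 0 -> y != 0 ->
  exists g, [/\ dvdR g x, dvdR g y & forall d, dvdR d x -> dvdR d y -> dvdR d g].
Proof.
move=> Hx Hy.
have [m Hm] := gcdR x y.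
have Hmm : dvdR x m /\ dvdR y m by apply/Hm; exact: dvd_refl.
case: Hmm => [[p Hp] [q Hq]].
have [g Hg] : dvdR m (x * y) by apply/Hm; split; [exact: dvd_factl | exact: dvd_factr].
have Hm0 : m != 0.
  by apply: contraNneq (mulf_neq0 Hx Hy) => Hm0; rewrite Hg Hm0 mulr0.
exists g; split.
- exists q; apply: (mulIf Hy); by rewrite /= Hg Hq mulrA [g * q]mulrC.
- exists p; apply: (mulIf Hx); by rewrite /= mulrC Hg Hp mulrA [g * p]mulrC.
move=> d [x1 Hx1] [y1 Hy1].
have [f Hf] : dvdR m (x1 * y1 * d).
  apply/Hm; split.
    by exists y1; rewrite Hx1 mulrA [y1 * x1]mulrC.
  by exists x1; rewrite Hy1 mulrA.
exists f; apply: (mulIf Hm0).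
rewrite /= -Hg Hx1 Hy1.
rewrite [f * d * m]mulrAC -Hf.
by rewrite mulrAC -!mulrA; congr (_ * _); rewrite mulrCA.
Qed.

Lemma relprime_mulr x y z : rel_primeR x y -> rel_primeR x z -> rel_primeR x (y * z).
Proof.
move=> Hxy Hxz d Hdx Hdyz.
have Hdy : rel_primeR d y := relprime_dvd Hdx (dvd_refl y) Hxy.
exact: Hxz Hdx (gauss Hdy Hdyz).
Qed.

Lemma relprime_mull x y z : rel_primeR x z -> rel_primeR y z -> rel_primeR (x * y) z.
Proof.
move=> H1 H2; apply: relprime_sym; apply: relprime_mulr; exact: relprime_sym.
Qed.

Lemma sqf_mul_aux x y b : sqfR x -> rel_primeR x y -> dvdR (b * b) (x * y) -> rel_primeR b x.
Proof.
move=> Hx Hxy Hb d Hdb Hdx.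
have Hx0 := sqf_neq0 Hx.
have Hd0 : d != 0 := dvd_neq0 Hx0 Hdx.
case: Hdx => x' Hx'.
have Hdd : dvdR (d * d) (x * y) := dvd_trans (dvd_mul2 Hdb Hdb) Hb.
have Hdx'y : dvdR d (x' * y).
  apply: (@dvd_cancel _ d) => //.
  by rewrite [x' * y * d]mulrAC -Hx'.
have Hdy : rel_primeR d y.
  by apply: (relprime_dvd (dvd_factr x' d) (dvd_refl y)); rewrite -Hx'.
have Hdx' : dvdR d x'.
  by apply: (gauss Hdy); rewrite mulrC.
move/sqfP: Hx; apply.
by rewrite Hx'; apply: dvd_mul2 => //; exact: dvd_refl.
Qed.

Lemma sqf_mul x y : sqfR x -> sqfR y -> rel_primeR x y -> sqfR (x * y).
Proof.
move=> Hx Hy Hxy; apply/sqfP => b Hb.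
have Hbx := sqf_mul_aux Hx Hxy Hb.
have Hby : rel_primeR b y.
  apply: (sqf_mul_aux Hy (relprime_sym Hxy)); by rewrite [y * x]mulrC.
have Hb1 : dvdR b (x * y) := dvd_trans (dvd_factl b b) Hb.
have Hb2 : dvdR b y := gauss Hbx Hb1.
exact: Hby (dvd_refl b) Hb2.
Qed.

Lemma relprime_prodl (I : eqType) (r : seq I) (P : pred I) (F : I -> R) y :
  (forall i, i \in r -> P i -> rel_primeR (F i) y) ->
  rel_primeR (\prod_(i <- r | P i) F i) y.
Proof.
move=> H; rewrite big_seq_cond.
apply: (big_ind (fun v => rel_primeR v y)).
- by apply: relprime_unit; rewrite unitr1.
- by move=> v w; apply: relprime_mull.
by move=> i /andP[]; apply: H.
Qed.

Lemma relprime_prodr (I : eqType) (r : seq I) (P : pred I) (F : I -> R) y :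
  (forall i, i \in r -> P i -> rel_primeR y (F i)) ->
  rel_primeR y (\prod_(i <- r | P i) F i).
Proof.
move=> H; apply: relprime_sym; apply: relprime_prodl => i Hi HP.
exact: relprime_sym (H i Hi HP).
Qed.

End Gcd.
Section Lists.
Variable R : idomainType.
Hypothesis gcdR : gcd_domain R.

Fixpoint pw (L : seq (R * nat)) : Prop :=
  if L is x :: L' then (forall y, y \in L' -> rel_primeR x.1 y.1) /\ pw L' else True.

Definition Wf (a : R) := exists L, [/\ pw L, (forall x, x \in L -> sqfR x.1 /\ (1 <= x.2)%N)
  & a = \prod_(x <- L) x.1 ^+ x.2].

Lemma pw_filter P L : pw L -> pw (filter P L).
Proof.
elim: L => //= x L IH [Hx HL]; case: (P x) => /=; last exact: IH.
split; last exact: IH.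
by move=> y; rewrite mem_filter => /andP[_ Hy]; apply: Hx.
Qed.

Lemma pw_mem L x y : pw L -> x \in L -> y \in L -> x != y -> rel_primeR x.1 y.1.
Proof.
elim: L => //= z L IH [Hz HL]; rewrite !inE => /predU1P[->|Hx] /predU1P[->|Hy] Hne.
- by rewrite eqxx in Hne.
- exact: Hz.
- exact: relprime_sym (Hz _ Hx).
- exact: IH.
Qed.

Lemma sqf_prod_pw L : pw L -> (forall x, x \in L -> sqfR x.1) ->
  sqfR (\prod_(x <- L) x.1).
Proof.
elim: L => [|z L IH] /=.
  by move=> _ _; rewrite big_nil; apply: sqf_unit; rewrite unitr1.
move=> [Hz HL] H; rewrite big_cons; apply: sqf_mul => //.
- by apply: H; rewrite mem_head.
- by apply: IH => // x Hx; apply: H; rewrite inE Hx orbT.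
by apply: relprime_prodr => // i Hi _; apply: Hz.
Qed.

Lemma split_step L (s : R) : sqfR s -> pw L ->
  (forall x, x \in L -> sqfR x.1 /\ (1 <= x.2)%N) ->
  exists L', [/\ pw L', (forall y, y \in L' -> sqfR y.1 /\ (1 <= y.2)%N),
    (forall y, y \in L' -> dvdR y.1 s \/ exists2 x, x \in L & dvdR y.1 x.1) &
    s * \prod_(x <- L) x.1 ^+ (x.2 * 2) = \prod_(y <- L') y.1 ^+ y.2].
Proof.
elim: L s => [|[t e] L IH] s Hs HL HLs.
  exists [:: (s, 1%N)]; split => //=.
  - by move=> y; rewrite inE => /eqP ->.
  - by move=> y; rewrite inE => /eqP ->; left; exact: dvd_refl.
  by rewrite big_nil big_seq1 mulr1 expr1.
case: HL => /= HtL HL.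
have [Ht He] := HLs _ (mem_head _ _); rewrite /= in Ht He.
have [g [[s' Hs'] [t' Ht'] Hgmax]] := gcd_ex gcdR (sqf_neq0 Hs) (sqf_neq0 Ht).
have Hs's : dvdR s' s by rewrite Hs'; exact: dvd_factl.
have Ht't : dvdR t' t by rewrite Ht'; exact: dvd_factl.
have Hgs : dvdR g s by rewrite Hs'; exact: dvd_factr.
have Hgt : dvdR g t by rewrite Ht'; exact: dvd_factr.
have Hsqs' : sqfR s' := sqf_dvd Hs's Hs.
have HLs' : forall x, x \in L -> sqfR x.1 /\ (1 <= x.2)%N.
  by move=> x Hx; apply: HLs; rewrite inE Hx orbT.
have [L1 [pwL1 sqL1 orL1 eqL1]] := IH s' Hsqs' HL HLs'.
have Hgs' : rel_primeR g s'.
  by apply: relprime_sym; apply: sqf_mul_relprime; rewrite -Hs'.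
have Hts' : rel_primeR t s'.
  move=> d Hdt Hds'.
  have Hdg := Hgmax d (dvd_trans Hds' Hs's) Hdt.
  move/sqfP: Hs; apply; rewrite Hs'; exact: dvd_mul2.
have Hgt' : rel_primeR g t'.
  by apply: relprime_sym; apply: sqf_mul_relprime; rewrite -Ht'.
exists [:: (g, (e * 2).+1), (t', (e * 2)%N) & L1]; split.
- split.
    move=> y; rewrite inE => /predU1P[-> //|HyL1].
    case: (orL1 y HyL1) => [Hy|[x HxL Hyx]].
      exact: relprime_dvd (dvd_refl g) Hy Hgs'.
    exact: relprime_dvd Hgt Hyx (HtL x HxL).
  split => //= y HyL1.
  case: (orL1 y HyL1) => [Hy|[x HxL Hyx]].
    exact: relprime_dvd Ht't Hy Hts'.
  exact: relprime_dvd Ht't Hyx (HtL x HxL).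
- move=> y; rewrite !inE => /predU1P[->|/predU1P[->|Hy]] /=.
  + by split => //; exact: sqf_dvd Hgs Hs.
  + by split; [exact: sqf_dvd Ht't Ht | rewrite muln_gt0 He].
  + exact: sqL1.
- move=> y; rewrite !inE => /predU1P[->|/predU1P[->|Hy]] /=.
  + by left.
  + by right; exists (t, e) => //; rewrite mem_head.
  + case: (orL1 y Hy) => [H|[x Hx H]].
      by left; exact: dvd_trans H Hs's.
    by right; exists x => //; rewrite inE Hx orbT.
rewrite !big_cons /= -eqL1 {1}Hs' Ht'.
rewrite exprMn exprS. set X := g ^+ _. set Y := t' ^+ _. set P := \prod_(_ <- _) _. ring.
Qed.

Lemma ii_W n (s : nat -> R) : (forall i, (i <= n)%N -> sqfR (s i)) ->
  Wf (\prod_(i < n.+1) s i ^+ (2 ^ i)).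
Proof.
elim: n s => [|n IH] s Hs.
  exists [:: (s 0%N, 1%N)]; split => //=.
  - by move=> y; rewrite inE => /eqP -> /=; split => //; exact: Hs.
  by rewrite big_ord1 big_seq1 expn0.
rewrite big_ord_recl /= expn0 expr1.
have [L [pwL sqL eqL]] := IH (fun i => s i.+1) (fun i Hi => Hs i.+1 Hi).
have Hb : \prod_(i < n.+1) s (bump 0 i) ^+ (2 ^ bump 0 i) =
          \prod_(x <- L) x.1 ^+ (x.2 * 2).
  transitivity ((\prod_(i < n.+1) s i.+1 ^+ (2 ^ i)) ^+ 2).
    rewrite -prodrXl; apply: eq_bigr => i _.
    by rewrite /bump /= add1n expnS mulnC exprM.
  by rewrite eqL -prodrXl; apply: eq_bigr => x _; rewrite exprM.
rewrite Hb.
have [L' [pwL' sqL' _ eqL']] := split_step (Hs 0%N isT) pwL sqL.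
by exists L'; split.
Qed.

End Lists.
Lemma bin_sum N e : (e < 2 ^ N)%N -> (\sum_(k < N) odd (e %/ 2 ^ k) * 2 ^ k)%N = e.
Proof.
elim: N e => [|N IH] e He.
  by rewrite big_ord0; move: He; rewrite expn0 ltnS leqn0 => /eqP ->.
rewrite big_ord_recl /= expn0 divn1 muln1.
have -> : (\sum_(i < N) odd (e %/ 2 ^ bump 0 i) * 2 ^ bump 0 i =
          2 * \sum_(i < N) odd (e %/ 2 %/ 2 ^ i) * 2 ^ i)%N.
  rewrite big_distrr /=; apply: eq_bigr => i _.
  by rewrite /bump /= add1n expnS divnMA mulnCA.
rewrite IH; last by rewrite ltn_divLR // mulnC -expnS.
by rewrite divn2 mul2n odd_double_half.
Qed.

Section Part4.
Variable R : idomainType.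
Hypothesis gcdR : gcd_domain R.

Lemma leq_sum_mem (L : seq (R * nat)) x : x \in L -> (x.2 <= \sum_(y <- L) y.2)%N.
Proof.
elim: L => //= z L IH; rewrite inE big_cons => /predU1P[->|Hx].
  exact: leq_addr.
exact: leq_trans (IH Hx) (leq_addl _ _).
Qed.

Lemma W_vi (a : R) : Wf a -> cond_vi a.
Proof.
move=> [L [pwL sqL ->]].
pose n := (\sum_(y <- L) y.2).+1.
exists n, (fun i => \prod_(x <- L | x.2 == i) x.1); split => //; split; [|split].
- move=> i _; rewrite -big_filter; apply: sqf_prod_pw => //.
    exact: pw_filter.
  by move=> x; rewrite mem_filter => /andP[_ /sqL[]].
- move=> i j _ _ Hij.
  apply: relprime_prodl => // x Hx /eqP Hxi.
  apply: relprime_prodr => // y Hy /eqP Hyj.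
  apply: pw_mem pwL Hx Hy _; apply/eqP => Hxy; apply: Hij.
  by rewrite -Hxi -Hyj Hxy.
symmetry.
transitivity (\prod_(1 <= i < n.+1) \prod_(x <- L) (if x.2 == i then x.1 ^+ x.2 else 1)).
  apply: eq_bigr => i _; rewrite -prodrXl big_mkcond /=; apply: eq_bigr => x _.
  by case: eqP => // ->.
rewrite exchange_big /=; apply: eq_big_seq => x Hx.
rewrite -big_mkcond /=.
rewrite (eq_bigl (fun i => i == x.2)); last by move=> i; rewrite eq_sym.
rewrite big_nat1_eq.
have [_ H1] := sqL x Hx.
by rewrite H1 /= /n ltnS (leq_trans (leq_sum_mem Hx) (leqnSn _)).
Qed.

Lemma W_ii (a : R) : Wf a -> cond_ii a.
Proof.
move=> [L [pwL sqL ->]].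
pose n := (\sum_(y <- L) y.2)%N.
exists n, (fun k => \prod_(x <- L | odd (x.2 %/ 2 ^ k)) x.1); split.
- move=> i _; rewrite -big_filter; apply: sqf_prod_pw => //.
    exact: pw_filter.
  by move=> x; rewrite mem_filter => /andP[_ /sqL[]].
symmetry.
transitivity (\prod_(k < n.+1) \prod_(x <- L) (if odd (x.2 %/ 2 ^ k) then x.1 ^+ (2 ^ k) else 1)).
  apply: eq_bigr => k _; rewrite -prodrXl big_mkcond /=; apply: eq_bigr => x _.
  by case: ifP.
rewrite exchange_big /=; apply: eq_big_seq => x Hx.
rewrite -big_mkcond /= prodrXr; congr (_ ^+ _).
rewrite big_mkcond /=.
rewrite -[RHS](@bin_sum n.+1); last first.
  apply: leq_ltn_trans (leq_sum_mem Hx) _.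
  exact: leq_trans (ltn_expl _ (isT : 1 < 2)%N) (leq_pexp2l _ (leqnSn _)).
by apply: eq_bigr => k _; case: ifP => _; rewrite ?mul1n ?mul0n.
Qed.

End Part4.
Section Part5.
Variable R : idomainType.

Lemma drop_units (F : nat -> R) (P : pred nat) (r : seq nat) :
  sorted ltn r -> (forall i, i \in r -> ~~ P i -> F i \is a GRing.unit) ->
  exists (m : nat) (k : nat -> nat) (c : R),
   [/\ c \is a GRing.unit,
       (forall j, (1 <= j <= m)%N -> k j \in r /\ P (k j)),
       (forall i j, (1 <= i)%N -> (i < j)%N -> (j <= m)%N -> (k i < k j)%N) &
       \prod_(i <- r) F i = c * \prod_(1 <= j < m.+1) F (k j)].
Proof.
move=> Hr HF.
pose r' := filter P r.
have Hr' : sorted ltn r' by apply: sorted_filter => //; exact: ltn_trans.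
exists (size r'), (fun j => nth 0%N r' j.-1), (\prod_(i <- r | ~~ P i) F i); split.
- by apply: unitr_prod_in => i Hi HP; apply: HF.
- move=> j /andP[Hj1 Hj2].
  have : nth 0%N r' j.-1 \in r'.
    by apply: mem_nth; rewrite prednK.
  by rewrite mem_filter => /andP[-> ->].
- move=> i j Hi Hij Hj.
  apply: (sorted_ltn_nth ltn_trans 0%N Hr').
  + rewrite inE; lia.
  + rewrite inE; lia.
  + lia.
rewrite (bigID P) /= mulrC; congr (_ * _).
rewrite -big_filter (big_nth 0%N) big_add1 /=.
by apply: eq_bigr.
Qed.

Lemma ii_iii (a : R) : ~~ (a \is a GRing.unit) -> cond_ii a -> cond_iii a.
Proof.
move=> Ha [n [s [Hs Ha']]].
have := @drop_units (fun i => s i ^+ (2 ^ i)) (fun i => ~~ (s i \is a GRing.unit))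
  (index_iota 0 n.+1) (iota_ltn_sorted _ _).
case.
  by move=> i _; rewrite negbK => Hu; rewrite unitrX.
move=> m [k [c [Hc Hk Hinc Heq]]].
have Hm : (1 <= m)%N.
  case: m Hk Hinc Heq => // _ _ Heq; move: Ha; rewrite Ha' -(big_mkord xpredT (fun i => s i ^+ (2 ^ i))) Heq big_geq // mulr1 Hc //.
exists m, (fun j => s (k j)), k, c; split => //; split; [|split; [|split => //]].
- move=> i Hi; have [Hir HP] := Hk i Hi; split => //.
  by apply: Hs; move: Hir; rewrite mem_index_iota ltnS.
- by move=> i /andP[Hi1 Hi2]; apply: Hinc.
by rewrite Ha' -(big_mkord xpredT (fun i => s i ^+ (2 ^ i))) Heq.
Qed.

Lemma vi_vii (a : R) : ~~ (a \is a GRing.unit) -> cond_vi a -> cond_vii a.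
Proof.
move=> Ha [n [s [Hn [Hs [Hrp Ha']]]]].
have := @drop_units (fun i => s i ^+ i) (fun i => ~~ (s i \is a GRing.unit))
  (index_iota 1 n.+1) (iota_ltn_sorted _ _).
case.
  by move=> i _; rewrite negbK => Hu; rewrite unitrX.
move=> m [k [c [Hc Hk Hinc Heq]]].
have Hm : (1 <= m)%N.
  case: m Hk Hinc Heq => // _ _ Heq; move: Ha; rewrite Ha' Heq big_geq // mulr1 Hc //.
have Hkr : forall j, (1 <= j <= m)%N -> (1 <= k j <= n)%N.
  by move=> j Hj; have [Hir _] := Hk j Hj; move: Hir; rewrite mem_index_iota ltnS.
exists m, (fun j => s (k j)), k, c; split => //; split; [|split; [|split; [|split; [|split]]]] => //.
- move=> i Hi; have [Hir HP] := Hk i Hi; split => //.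
  exact: Hs (Hkr i Hi).
- have H1 : (1 <= 1 <= m)%N by rewrite leqnn Hm.
  by have /andP[] := Hkr 1%N H1.
- by move=> i /andP[Hi1 Hi2]; apply: Hinc.
- move=> i j Hi Hj Hij; apply: Hrp; [exact: Hkr | exact: Hkr |].
  move/andP: Hi => [Hi1 Hi2]; move/andP: Hj => [Hj1 Hj2].
  case: (ltngtP i j) => [Hlt|Hlt|Heqij]; last by [].
    by move=> E; have := Hinc i j Hi1 Hlt Hj2; rewrite E ltnn.
  by move=> E; have := Hinc j i Hj1 Hlt Hi2; rewrite E ltnn.
by rewrite Ha' Heq.
Qed.

End Part5.
Lemma incr_gen (k : nat -> nat) n : (forall i, (1 <= i < n)%N -> (k i < k i.+1)%N) ->
  forall i j, (1 <= i)%N -> (i < j)%N -> (j <= n)%N -> (k i < k j)%N.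
Proof.
move=> H i j Hi; elim: j => // j IH Hij Hj.
rewrite ltnS leq_eqVlt in Hij; case/orP: Hij => [/eqP Eij|Hij].
  by subst i; apply: H; lia.
apply: ltn_trans (IH Hij (ltnW Hj)) (H j _).
lia.
Qed.

Lemma incr_inj (k : nat -> nat) n : (forall i, (1 <= i < n)%N -> (k i < k i.+1)%N) ->
  forall i j, (1 <= i <= n)%N -> (1 <= j <= n)%N -> k i = k j -> i = j.
Proof.
move=> H i j /andP[Hi1 Hi2] /andP[Hj1 Hj2] E.
case: (ltngtP i j) => // Hlt.
  by have := incr_gen H Hi1 Hlt Hj2; rewrite E ltnn.
by have := incr_gen H Hj1 Hlt Hi2; rewrite E ltnn.
Qed.

Section Part6.
Variable R : idomainType.

Lemma iii_ii (a : R) : cond_iii a -> cond_ii a.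
Proof.
move=> [n [s [k [c [Hn [Hs [Hk [Hc Ha]]]]]]]].
pose N := k n.
pose t i := (if i == 0%N then c else 1) * \prod_(1 <= j < n.+1 | k j == i) s j.
have HkN : forall j, (1 <= j <= n)%N -> (k j <= N)%N.
  move=> j /andP[Hj1 Hj2]; rewrite leq_eqVlt in Hj2; case/orP: Hj2 => [/eqP ->//|Hj2].
  exact: ltnW (incr_gen Hk Hj1 Hj2 (leqnn n)).
have Hprod : forall i, (exists2 j, (1 <= j <= n)%N & k j = i /\
      \prod_(1 <= j < n.+1 | k j == i) s j = s j) \/
    \prod_(1 <= j < n.+1 | k j == i) s j = 1.
  move=> i; case: (boolP (has (fun j => k j == i) (index_iota 1 n.+1))).
    move/hasP => [j0 Hj0 /eqP Hkj0]; left; exists j0.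
      by move: Hj0; rewrite mem_index_iota ltnS.
    split => //.
    rewrite big_nat_cond (eq_bigl (fun j => (1 <= j < n.+1)%N && (j == j0))).
      by rewrite -big_nat_cond big_nat1_eq -mem_index_iota Hj0.
    move=> j /=; case: (boolP (1 <= j < n.+1)%N) => //= Hj.
    apply/idP/idP => /eqP E; apply/eqP; last by rewrite E.
    apply: (incr_inj Hk).
    - by rewrite ltnS in Hj.
    - by move: Hj0; rewrite mem_index_iota ltnS.
    by rewrite E.
  by move=> Hno; right; rewrite big_hasC.
exists N, t; split.
  move=> i _; rewrite /t; apply: sqf_unitl.
    by case: (i == 0%N) => //; rewrite unitr1.
  case: (Hprod i) => [[j Hj [_ ->]]|->].
    by case: (Hs j Hj).
  by apply: sqf_unit; rewrite unitr1.
rewrite Ha -(big_mkord xpredT (fun i => t i ^+ (2 ^ i))) /t.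
rewrite [RHS](eq_bigr (fun i => (if i == 0%N then c else 1) ^+ (2 ^ i) *
   (\prod_(1 <= j < n.+1 | k j == i) s j) ^+ (2 ^ i))); last by move=> i _; rewrite exprMn.
rewrite big_split /=; congr (_ * _).
  rewrite big_nat_recl // eqxx expn0 expr1 big1 ?mulr1 //.
  by move=> i _; rewrite expr1n.
symmetry.
transitivity (\prod_(0 <= i < N.+1) \prod_(1 <= j < n.+1) (if k j == i then s j ^+ (2 ^ k j) else 1)).
  apply: eq_bigr => i _; rewrite -prodrXl big_mkcond /=; apply: eq_bigr => j _.
  by case: eqP => // ->.
rewrite exchange_big /=; apply: eq_big_seq => j Hj.
rewrite -big_mkcond /=.
rewrite (eq_bigl (fun i => i == k j)); last by move=> i; rewrite eq_sym.
rewrite big_nat1_eq /= ltnS HkN //.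
by move: Hj; rewrite mem_index_iota ltnS.
Qed.

Lemma pw_map (s : nat -> R) (k : nat -> nat) (r : seq nat) : uniq r ->
  (forall i j, i \in r -> j \in r -> i <> j -> rel_primeR (s i) (s j)) ->
  pw [seq (s i, k i) | i <- r].
Proof.
elim: r => //= i r IH /andP[Hi Hu] H; split.
  move=> y /mapP [j Hj ->] /=; apply: H; rewrite ?inE ?eqxx ?Hj ?orbT //.
  by move=> E; move: Hi; rewrite E Hj.
apply: IH => // i' j' Hi' Hj'; apply: H; by rewrite inE ?Hi' ?Hj' orbT.
Qed.

Lemma vii_W (a : R) : cond_vii a -> Wf a.
Proof.
move=> [n [s [k [c [Hn [Hs [Hk1 [Hk [Hc [Hrp Ha]]]]]]]]]].
exists ((c, 1%N) :: [seq (s i, k i) | i <- index_iota 1 n.+1]); split.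
- split.
    by move=> y _; apply: relprime_unit.
  apply: pw_map; first exact: iota_uniq.
  by move=> i j; rewrite !mem_index_iota !ltnS; apply: Hrp.
- move=> y; rewrite inE => /predU1P[-> /=|/mapP [i Hi ->] /=].
    by split => //; exact: sqf_unit.
  move: Hi; rewrite mem_index_iota ltnS => Hi.
  split; first by case: (Hs i Hi).
  case/andP: Hi => Hi1 Hi2; rewrite leq_eqVlt in Hi1; case/orP: Hi1 => [/eqP <-//|Hi1].
  exact: leq_trans Hk1 (ltnW (incr_gen Hk (leqnn 1) Hi1 Hi2)).
by rewrite Ha big_cons /= expr1 big_map.
Qed.

End Part6.
Section Part7.
Variable R : idomainType.
Hypothesis gcdR : gcd_domain R.

Lemma sqf_prod_range (s : nat -> R) (r : seq nat) (P : pred nat) : uniq r ->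
  (forall i, i \in r -> P i -> sqfR (s i)) ->
  (forall i j, i \in r -> j \in r -> P i -> P j -> i <> j -> rel_primeR (s i) (s j)) ->
  sqfR (\prod_(i <- r | P i) s i).
Proof.
move=> Hu Hs Hrp.
rewrite -big_filter -[X in sqfR X](big_map (fun i => (s i, 0%N)) xpredT (fun x => x.1)).
apply: sqf_prod_pw => //.
  apply: pw_map; first exact: filter_uniq.
  by move=> i j; rewrite !mem_filter => /andP[Hi Hir] /andP[Hj Hjr]; apply: Hrp.
by move=> x /mapP [i]; rewrite mem_filter => /andP[Hi Hir] -> /=; apply: Hs.
Qed.

Lemma vii_v (a : R) : cond_vii a -> cond_v a.
Proof.
move=> [n [s [k [c [Hn [Hs [Hk1 [Hk [Hc [Hrp Ha]]]]]]]]]].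
pose kk i := if i == 0%N then 0%N else k i.
pose e j := (kk j - kk j.-1)%N.
pose u j := \prod_(1 <= i < n.+1 | (j <= i)%N) s i.
have He : forall j, (1 <= j <= n)%N -> (1 <= e j)%N.
  move=> j /andP[Hj1 Hj2]; rewrite /e /kk subn_gt0.
  case: j Hj1 Hj2 => // j _ Hj2; case: j Hj2 => [|j] Hj2 //=.
  by apply: Hk; rewrite /= Hj2.
have Hsqu : forall j, sqfR (u j).
  move=> j; apply: sqf_prod_range; first exact: iota_uniq.
    by move=> i; rewrite mem_index_iota ltnS => Hi _; case: (Hs i Hi).
  by move=> i i'; rewrite !mem_index_iota !ltnS => Hi Hi' _ _; apply: Hrp.
have Hu : forall l, (1 <= l <= n)%N -> u l = s l * u l.+1.
  move=> l Hl; rewrite /u (bigID (fun i => i == l)) /=; congr (_ * _).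
    rewrite (eq_bigl (fun i => i == l)); last first.
      by move=> i; case: (boolP (i == l)) => [/eqP ->|]; rewrite ?leqnn ?andbF.
    by rewrite big_nat1_eq ltnS Hl.
  apply: eq_bigl => i /=; by rewrite [(l < i)%N]ltn_neqAle andbC eq_sym.
have Hnu : forall l, (1 <= l <= n)%N -> ~~ (u l \is a GRing.unit).
  move=> l Hl; apply/negP => Hul.
  have Hd : dvdR (s l) (u l) by rewrite (Hu l Hl); exact: dvd_factl.
  have := dvd_unit Hul Hd.
  by case: (Hs l Hl) => _ /negP.
exists n, (fun j => u (n.+1 - j)%N), (fun j => e (n.+1 - j)%N), c.
have Hrng : forall j, (1 <= j <= n)%N -> (1 <= n.+1 - j <= n)%N.
  by move=> j /andP[Hj1 Hj2]; apply/andP; split; lia.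
split => //; split; [|split; [|split => //; split]].
- by move=> j Hj; split; [exact: Hsqu | apply: Hnu; exact: Hrng].
- by move=> j Hj; apply: He; exact: Hrng.
- move=> j /andP[Hj1 Hj2].
  have -> : (n.+1 - j.+1 = (n - j))%N by rewrite subSS.
  have -> : (n.+1 - j = (n - j).+1)%N by rewrite subSn // ltnW.
  have Hl : (1 <= n - j <= n)%N by apply/andP; split; lia.
  rewrite (Hu _ Hl); split; first exact: dvd_factr.
  move=> [_ H].
  have Hdiv : dvdR (s (n - j)%N) 1.
    apply: (@dvd_cancel _ (u (n - j).+1)); first exact: sqf_neq0.
    by rewrite mul1r.
  by case: (Hs _ Hl) => _ /negP; apply; exact: dvd1 Hdiv.
rewrite Ha; congr (_ * _).
have Hrev : \prod_(1 <= j < n.+1) u j ^+ e j =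
    \prod_(1 <= i < n.+1) u (n.+1 - i)%N ^+ e (n.+1 - i)%N.
  by rewrite big_nat_rev /=; apply: eq_bigr => i _; rewrite add1n subSS.
rewrite -Hrev.
symmetry.
transitivity (\prod_(1 <= j < n.+1) \prod_(1 <= i < n.+1) (if (j <= i)%N then s i ^+ e j else 1)).
  by apply: eq_bigr => j _; rewrite /u -prodrXl big_mkcond.
rewrite exchange_big /=; apply: eq_big_seq => i; rewrite mem_index_iota ltnS => Hi.
rewrite -big_mkcond /= prodrXr; congr (_ ^+ _).
rewrite (big_cat_nat _ (n := i.+1)) //=; last by case/andP: Hi.
rewrite [X in (_ + X)%N]big_nat_cond [X in (_ + X)%N]big_pred0; last first.
  by move=> j; case: (leqP j i) => Hji; rewrite ?andbT ?andbF //.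
rewrite addn0 big_nat_cond (eq_bigl (fun j => (1 <= j < i.+1)%N && true)); last first.
  by move=> j; rewrite ltnS; case: (j <= i)%N; rewrite ?andbT ?andbF.
rewrite -big_nat_cond /e big_add1 /= .
rewrite (telescope_sumn_in (f := kk)) //.
  by case: i Hi => // i Hi; rewrite /kk /= subn0.
move=> j /andP[_ Hj]; rewrite /kk /=; case: j Hj => // j Hj.
apply: ltnW; apply: Hk; rewrite /=; lia.
Qed.

End Part7.
Section Part8.
Variable R : idomainType.
Hypothesis gcdR : gcd_domain R.

Fixpoint chainL (l : seq R) : Prop :=
  if l is x :: l' then (if l' is y :: _ then dvdR x y else True) /\ chainL l' else True.

Lemma chainL_nth l i : chainL l -> (i.+1 < size l)%N ->
  dvdR (nth 0 l i) (nth 0 l i.+1).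
Proof.
elim: l i => //= x l IH i [Hx Hl] Hi.
case: i Hi => [|i] Hi.
  by case: l IH Hx Hl Hi.
exact: IH.
Qed.

Lemma chainL_cat l1 l2 : chainL l1 -> chainL l2 ->
  (l1 != [::] -> l2 != [::] -> dvdR (last 0 l1) (head 0 l2)) -> chainL (l1 ++ l2).
Proof.
elim: l1 => //= x l1 IH [Hx Hl1] Hl2 H; split.
  case: l1 IH Hx Hl1 H => [|y l1] IH Hx Hl1 H /=.
    by clear IH; case: l2 Hl2 H => // z l2 _ H; exact: H.
  exact: Hx.
apply: IH => // Hne1 Hne2.
by case: l1 Hx Hl1 H Hne1 => // y l1 _ _ H _; exact: H.
Qed.

Lemma chainL_nseq m x : chainL (nseq m x).
Proof. by elim: m => //= m IH; split => //; case: m IH => //= m _; exact: dvd_refl. Qed.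

Lemma last_nseq m (x0 x : R) : last x0 (nseq m.+1 x) = x.
Proof. by elim: m. Qed.

Lemma prod_nseq m (x : R) : \prod_(y <- nseq m x) y = x ^+ m.
Proof. by elim: m => [|m IH]; rewrite ?big_nil ?expr0 //= big_cons IH exprS. Qed.

Lemma prod_const_seq (I : Type) (l : seq I) (x : R) : \prod_(y <- l) x = x ^+ size l.
Proof. by elim: l => [|z l IH]; rewrite ?big_nil ?expr0 //= big_cons IH exprS. Qed.

Definition IVL (a : R) := exists l, [/\ l != [::], chainL l, (forall x, x \in l -> sqfR x)
  & a = \prod_(x <- l) x].

Lemma IVL_iv (a : R) : IVL a -> cond_iv a.
Proof.
move=> [l [Hne Hch Hsq ->]].
exists (size l), (fun i => nth 0 l i.-1); split; [|split; [|split]].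
- by case: l Hne Hch Hsq.
- move=> i /andP[Hi1 Hi2]; apply: Hsq; apply: mem_nth; lia.
- move=> i /andP[Hi1 Hi2].
  have := chainL_nth (i := i.-1) Hch; rewrite /= prednK //; by move/(_ Hi2).
rewrite big_add1 /= (big_nth 0) /=.
by [].
Qed.

Lemma v_iv (a : R) : cond_v a -> cond_iv a.
Proof.
move=> [n [s [k [c [Hn [Hs [Hk [Hc [Hdv Ha]]]]]]]]].
apply: IVL_iv.
pose l m := flatten [seq nseq (k i) (s i) | i <- iota 1 m].
have Hl : forall m, (1 <= m <= n)%N -> chainL (l m) /\ last 0 (l m) = s m.
  elim => // m IH /andP[_ Hm].
  have Hkm : (1 <= k m.+1)%N by apply: Hk; rewrite /= Hm.
  have -> : l m.+1 = l m ++ nseq (k m.+1) (s m.+1).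
    rewrite /l; have -> : iota 1 m.+1 = iota 1 m ++ [:: m.+1] by rewrite -(addn1 m) iotaD /= add1n addn1.
    by rewrite map_cat flatten_cat /= cats0.
  case: m IH Hm Hkm => [|m] IH Hm Hkm.
    by rewrite /l /=; split; [exact: chainL_nseq | rewrite -(prednK Hkm) last_nseq].
  have [IH1 IH2] := IH (ltnW Hm).
  split.
    apply: chainL_cat => //; first exact: chainL_nseq.
    move=> _ _; rewrite IH2 -(prednK Hkm) /=.
    by case: (Hdv m.+1 _) => //; rewrite /= Hm.
  by rewrite last_cat -(prednK Hkm) last_nseq.
have Hmem : forall x, x \in l n -> exists2 i, (1 <= i <= n)%N & x = s i.
  move=> x /flattenP [y /mapP [i Hi ->]] /nseqP [-> _].
  by exists i => //; move: Hi; rewrite mem_iota add1n ltnS.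
have Hprod : \prod_(x <- l n) x = \prod_(1 <= i < n.+1) s i ^+ k i.
  rewrite /l big_flatten big_map /index_iota subSS subn0.
  by apply: eq_bigr => i _; rewrite prod_nseq.
have Hn1 : (1 <= n <= n)%N by rewrite Hn leqnn.
have H11 : (1 <= 1 <= n)%N by rewrite leqnn Hn.
have [Hch _] := Hl n Hn1.
have Hne : l n != [::].
  apply/eqP => E; have := Hk 1%N H11.
  have : s 1%N \in l n.
    apply/flattenP; exists (nseq (k 1%N) (s 1%N)).
      by apply/mapP; exists 1%N => //; rewrite mem_iota leqnn add1n ltnS.
    by rewrite mem_nseq eqxx andbT; exact: Hk 1%N H11.
  by rewrite E.
case E: (l n) Hne Hch Hmem Hprod => [//|x0 l'] _ Hch Hmem Hprod.
exists ((c * x0) :: l'); split => //.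
- case: l' E Hch Hmem Hprod => [|y l'] E Hch Hmem Hprod /=; split => //.
    exact: dvd_trans (unit_mul_dvd x0 Hc) Hch.1.
  exact: Hch.2.
- move=> x; rewrite inE => /predU1P[->|Hx].
    apply: sqf_unitl => //; have [i Hi ->] := Hmem x0 (mem_head _ _).
    by case: (Hs i Hi).
  have Hx' : x \in x0 :: l' by rewrite inE Hx orbT.
  have [i Hi ->] := Hmem x Hx'.
  by case: (Hs i Hi).
by rewrite Ha -Hprod !big_cons mulrA.
Qed.

End Part8.
Section Part9.
Variable R : idomainType.
Hypothesis gcdR : gcd_domain R.

Lemma chainL_head (x : R) l : chainL (x :: l) -> forall y, y \in l -> dvdR x y.
Proof.
elim: l x => //= y l IH x [Hxy Hyl] z; rewrite inE => /predU1P[->//|Hz].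
exact: dvd_trans Hxy (IH y Hyl z Hz).
Qed.

Lemma divide_out (x : R) l : (forall y, y \in l -> dvdR x y) ->
  exists l'', l = map (fun z => z * x) l''.
Proof.
elim: l => [|y l IH] H; first by exists [::].
have [z Hz] := H y (mem_head _ _).
have [l'' ->] : exists l'', l = map (fun z => z * x) l''.
  by apply: IH => w Hw; apply: H; rewrite inE Hw orbT.
by exists (z :: l''); rewrite Hz.
Qed.

Lemma chainL_cancel (x : R) l'' : x != 0 -> chainL (map (fun z => z * x) l'') -> chainL l''.
Proof.
move=> Hx; elim: l'' => //= z l IH [H1 H2]; split; last exact: IH.
by case: l IH H1 H2 => //= w l _ H1 _; exact: dvd_cancel Hx H1.
Qed.

Lemma chain_W n (l : seq R) : (size l <= n)%N -> chainL l -> (forall x, x \in l -> sqfR x) ->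
  exists L, [/\ pw L,
    (forall y, y \in L -> [/\ sqfR y.1, (1 <= y.2)%N & dvdR y.1 (last 1 l)]) &
    \prod_(x <- l) x = \prod_(y <- L) y.1 ^+ y.2].
Proof.
elim: n l => [|n IH] l Hs Hch Hsq; case: l Hs Hch Hsq => [|x l'] Hs Hch Hsq //.
- by exists [::]; split => //; rewrite !big_nil.
- by exists [::]; split => //; rewrite !big_nil.
have Hx : sqfR x by apply: Hsq; rewrite mem_head.
have Hx0 := sqf_neq0 Hx.
have [l'' El] := divide_out (chainL_head Hch).
subst l'.
have Hch'' : chainL l'' := chainL_cancel Hx0 Hch.2.
have Hsq'' : forall z, z \in l'' -> sqfR z.
  move=> z Hz; apply: (@sqf_dvd _ (z * x)); first exact: dvd_factl.
  by apply: Hsq; rewrite inE; apply/orP; right; apply/mapP; exists z.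
have Hs'' : (size l'' <= n)%N by move: Hs; rewrite /= size_map ltnS.
have [L'' [pwL'' HL'' EL'']] := IH l'' Hs'' Hch'' Hsq''.
have Hlast := last_map (fun z => z * x) l'' 1; rewrite /= mul1r in Hlast.
have Hsql : sqfR (last 1 l'' * x).
  by rewrite -Hlast; apply: Hsq; exact: mem_last.
have Hrp : rel_primeR x (last 1 l'').
  exact: relprime_sym (sqf_mul_relprime Hsql).
exists ((x, (size l'').+1) :: L''); split.
- split => //= y Hy; have [_ _ Hyd] := HL'' y Hy.
  exact: relprime_dvd (dvd_refl x) Hyd Hrp.
- move=> y; rewrite inE => /predU1P[-> /=|Hy].
    by split => //; rewrite Hlast; exact: dvd_factr.
  have [H1 H2 H3] := HL'' y Hy; split => //=.
  by rewrite Hlast; exact: dvd_mulr.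
rewrite big_cons big_map big_split /= prod_const_seq EL'' big_cons /= exprS.
set X := x ^+ _; set P := \prod_(_ <- _) _; ring.
Qed.

Lemma chainL_map_iota (s : nat -> R) m len :
  (forall i, (m <= i)%N -> (i.+1 < m + len)%N -> dvdR (s i) (s i.+1)) ->
  chainL (map s (iota m len)).
Proof.
elim: len m => //= len IH m H; split.
  case: len IH H => //= len _ H; apply: H; lia.
apply: IH => i Hi1 Hi2; apply: H; lia.
Qed.

Lemma iv_W (a : R) : cond_iv a -> Wf a.
Proof.
move=> [n [s [Hn [Hs [Hdv Ha]]]]].
have Hch : chainL (map s (iota 1 n)).
  by apply: chainL_map_iota => i Hi1 Hi2; apply: Hdv; lia.
have Hsq : forall x, x \in map s (iota 1 n) -> sqfR x.
  by move=> x /mapP [i Hi ->]; apply: Hs; move: Hi; rewrite mem_iota; lia.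
have [L [pwL HL EL]] := chain_W (leqnn _) Hch Hsq.
exists L; split => //.
  by move=> y Hy; have [H1 H2 _] := HL y Hy.
by rewrite Ha -EL big_map /index_iota subSS subn0.
Qed.

End Part9.

Unset Implicit Arguments.

Theorem proposition1 (R : idomainType) (a : R) :
  gcd_domain R -> a != 0 -> ~~ (a \is a GRing.unit) ->
  [<-> cond_ii a; cond_iii a; cond_iv a; cond_v a; cond_vi a; cond_vii a].
Proof.
move=> gcdR Ha0 Hau.
have iiW : cond_ii a -> Wf a.
  move=> [n [s [Hs ->]]]; have HH := ii_W gcdR Hs; exact: HH.
have Wvi : Wf a -> cond_vi a := W_vi gcdR (a:=a).
have Wii : Wf a -> cond_ii a := W_ii gcdR (a:=a).
have viivv : cond_vii a -> cond_v a := vii_v gcdR (a:=a).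
have vivii : cond_vi a -> cond_vii a := vi_vii Hau.
have iiiii : cond_ii a -> cond_iii a := ii_iii Hau.
have viv : cond_v a -> cond_iv a := @v_iv R a.
have ivW : cond_iv a -> Wf a := @iv_W R a.
have viiW : cond_vii a -> Wf a := @vii_W R a.
have iiiii' : cond_iii a -> cond_ii a := @iii_ii R a.
tfae.
- exact: iiiii.
- by move=> H; apply: viv; apply: viivv; apply: vivii; apply: Wvi; apply: iiW; apply: iiiii'.
- by move=> H; apply: viivv; apply: vivii; apply: Wvi; apply: ivW.
- by move=> H; apply: Wvi; apply: ivW; apply: viv.
- exact: vivii.
- by move=> H; apply: Wii; apply: viiW.
Qed.
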